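(* Let $0<w_1<\dots<w_n$ be integers with $\sum_{i=1}^n w_i<2^n-1$, and let $\Delta$ satisfy $2^{n/2}\le\Delta\le d<2^n$. Then there exists $j\in\{0,1,\dots,n-1\}$ such that $\#\{t: f_t>2^j\}>\frac{\Delta}{2^{j+1}n}$.
   Context: Let $w(S)=\sum_{i\in S}w_i$. The frequency is $f_t=\#\{S\subseteq\{1,\dots,n\}:w(S)=t\}$ for integers $t\ge0$. The parameter is $d=\sum_{0\le t<2^n}\max\{0,f_t-1\}$. *)

(* Defs.v *)
From mathcomp Require Import all_boot all_order all_algebra.
Set Implicit Arguments. Unset Strict Implicit. Unset Printing Implicit Defensive.

Definition wsum (n : nat) (w : 'I_n -> nat) (S : {set 'I_n}) : nat :=
  \sum_(i in S) w i.

Definition freq (n : nat) (w : 'I_n -> nat) (t : nat) : nat :=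
  #|[set S : {set 'I_n} | wsum w S == t]|.

(* d = sum_{0 <= t < 2^n} max{0, f_t - 1}  (truncated subtraction = max(0,.)) *)
Definition dpar (n : nat) (w : 'I_n -> nat) : nat :=
  \sum_(0 <= t < 2 ^ n) (freq w t - 1).

(* #{t : f_t > k}; since f_t > 0 forces t <= sum w < 2^n under the
   hypotheses, it suffices to range over t < 2^n *)
Definition nbig (n : nat) (w : 'I_n -> nat) (k : nat) : nat :=
  #|[set t : 'I_(2 ^ n) | k < freq w t]|.

(* Main.v *)
Require Import Defs.
From mathcomp Require Import all_boot all_order all_algebra.
From mathcomp Require Import zify ring lra.
Import Order.TTheory GRing.Theory Num.Theory.
Local Open Scope ring_scope.

Lemma freq_le (n : nat) (w : 'I_n -> nat) t : (freq w t <= 2 ^ n)%N.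
Proof.
rewrite /freq; apply: leq_trans (max_card _) _.
by rewrite -cardsT -powersetT card_powerset cardsT card_ord.
Qed.

Lemma sum_pow2 m : ((\sum_(j < m) 2 ^ j).+1 = 2 ^ m)%N.
Proof.
elim: m => [|m IH]; first by rewrite big_ord0.
by rewrite big_ord_recr /= -addSn IH expnS mul2n addnn.
Qed.

Lemma layer m f : (f <= 2 ^ m)%N ->
  (f - 1 <= \sum_(j < m) 2 ^ j * (2 ^ j < f))%N.
Proof.
elim: m f => [|m IH] f Hf.
  by rewrite big_ord0; move: Hf; rewrite expn0; case: f => [|[]].
rewrite big_ord_recr /=.
case: (leqP f (2 ^ m)) => Hfm.
  by apply: leq_trans (IH _ Hfm) _; apply: leq_addr.
rewrite [(_ * true)%N]muln1.
have -> : (\sum_(j < m) 2 ^ j * (2 ^ j < f) = \sum_(j < m) 2 ^ j)%N.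
  apply: eq_bigr => j _.
  have -> : (2 ^ j < f)%N.
    apply: leq_ltn_trans _ Hfm; rewrite leq_exp2l //; exact: ltnW (ltn_ord j).
  exact: muln1.
have := sum_pow2 m; move: Hf; rewrite expnS; lia.
Qed.

Lemma key (n : nat) (w : 'I_n -> nat) :
  (dpar w <= \sum_(j < n) 2 ^ j * nbig w (2 ^ j))%N.
Proof.
rewrite /dpar /nbig.
have -> : (\sum_(j < n) 2 ^ j * #|[set t : 'I_(2 ^ n) | 2 ^ j < freq w t]|
   = \sum_(t : 'I_(2 ^ n)) \sum_(j < n) 2 ^ j * (2 ^ j < freq w t))%N.
  rewrite exchange_big /=; apply: eq_bigr => j _.
  rewrite -sum1_card big_distrr /= big_mkcond /=.
  apply: eq_bigr => t _; rewrite inE; case: (_ < _)%N => /=.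
    by rewrite muln1.
  by rewrite muln0.
rewrite big_mkord.
apply: leq_sum => t _; apply: layer; exact: freq_le.
Qed.

Theorem lemma3p5 (R : rcfType) (n : nat) (w : 'I_n -> nat) (Delta : R) :
  (forall i, 0 < w i)%N ->
  (forall i j : 'I_n, (i < j)%N -> (w i < w j)%N) ->
  (\sum_(i < n) w i < 2 ^ n - 1)%N ->
  Num.sqrt (2 ^+ n) <= Delta ->
  Delta <= (dpar w)%:R ->
  (dpar w < 2 ^ n)%N ->
  exists j : 'I_n,
    Delta / (2 ^+ j.+1 * n%:R) < (nbig w (2 ^ j))%:R.
Proof.
move=> _ _ Hsum Hsq HD _.
have n0 : (0 < n)%N.
  have : (0 < 2 ^ n - 1)%N by lia.
  by case: (n) => //; rewrite expn0 subnn.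
have Dpos : 0 < Delta.
  by apply: lt_le_trans Hsq; rewrite sqrtr_gt0 exprn_gt0.
have [/existsP [j Hj]|] := boolP [exists j : 'I_n,
   Delta / (2 ^+ j.+1 * n%:R) < (nbig w (2 ^ j))%:R]; first by exists j.
rewrite negb_exists => /forallP H.
exfalso.
have nR : (n%:R : R) != 0 by rewrite pnatr_eq0 -lt0n.
have : (dpar w)%:R <= Delta / 2 :> R.
  apply: (@le_trans _ _ (\sum_(j < n) ((2 ^ j * nbig w (2 ^ j))%N)%:R)).
    by rewrite -natr_sum ler_nat key.
  have -> : Delta / 2 = \sum_(j < n) Delta / (2 * n%:R).
    rewrite sumr_const card_ord -mulr_natr; by field; rewrite nR.
  apply: ler_sum => j _.
  rewrite natrM natrX.
  have := H j; rewrite -leNgt => Hj.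
  apply: le_trans (ler_wpM2l _ Hj) _; first by rewrite exprn_ge0.
  rewrite le_eqVlt; apply/orP; left; apply/eqP; rewrite exprS; field.
  by rewrite nR expf_neq0 // pnatr_eq0.
lra.
Qed.
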